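(* Let $G$ be a connected graph with $n\geq 2$ vertices and $m$ edges, and let $S(G)$ be its subdivision. Then $$R^+(S(G))=4R^+(G)+4R^*(G)+(m+n)(m-n+1)+2m(m-n).$$
   Context: All graphs are finite, undirected, without loops or multiple edges. For a connected graph $H$ and vertices $i,j$, the resistance distance $\Omega_{ij}$ is the effective resistance between $i$ and $j$ in the electrical network obtained from $H$ by replacing each edge by a unit resistor. With $d_i$ the degree of vertex $i$ in $H$ and sums over unordered pairs of distinct vertices of $H$: the Kirchhoff index is $R(H)=\sum_{\{i,j\}\subseteq V(H)}\Omega_{ij}$, the additive degree-Kirchhoff index is $R^+(H)=\sum_{\{i,j\}\subseteq V(H)}(d_i+d_j)\Omega_{ij}$, and the multiplicative degree-Kirchhoff index is $R^*(H)=\sum_{\{i,j\}\subseteq V(H)}d_id_j\Omega_{ij}$ (all computed in $H$ itself, with degrees and resistances of $H$). The subdivision $S(G)$ is the graph obtained from $G$ by replacing every edge with a path of length two (i.e., inserting one new vertex of degree 2 on each edge). *)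

(* Defs.v *)
From HB Require Import structures.
From mathcomp Require Import all_boot all_order all_algebra.
Set Implicit Arguments. Unset Strict Implicit. Unset Printing Implicit Defensive.
Import Order.TTheory GRing.Theory Num.Theory.
Local Open Scope ring_scope.

(* A simple graph is a relation e on a finite type T (assumed symmetric and
   irreflexive in the theorem).  Vertices are indexed in matrices through
   enum_rank / enum_val. *)
Section Graph.
Variable R : fieldType.
Variable T : finType.
Variable e : rel T.

Definition deg (x : T) : nat := #|[pred y | e x y]|.

Definition lap : 'M[R]_#|T| :=
  \matrix_(i, j) (if i == j then (deg (enum_val i))%:R
                  else if e (enum_val i) (enum_val j) then -1 else 0).

(* Resistance distance between x and y: inject a unit current at x and
   extract it at y; a potential vector v solves Kirchhoff's equations
   v L = e_x - e_y (L symmetric), computed with the partial inverse pinvmx;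
   Omega_xy is the potential difference v_x - v_y. *)
Definition resist (x y : T) : R :=
  let b : 'rV[R]_#|T| :=
    \row_k ((enum_val k == x)%:R - (enum_val k == y)%:R) in
  let v := b *m pinvmx lap in
  v 0 (enum_rank x) - v 0 (enum_rank y).

Definition kirchhoff : R :=
  \sum_(x : T) \sum_(y : T | (enum_rank x < enum_rank y)%N) resist x y.
Definition add_deg_kirchhoff : R :=
  \sum_(x : T) \sum_(y : T | (enum_rank x < enum_rank y)%N)
     ((deg x)%:R + (deg y)%:R) * resist x y.
Definition mul_deg_kirchhoff : R :=
  \sum_(x : T) \sum_(y : T | (enum_rank x < enum_rank y)%N)
     ((deg x)%:R * (deg y)%:R) * resist x y.

(* edges: each unordered edge {x,y} represented once as (x,y) with
   enum_rank x < enum_rank y *)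
Definition sedge (p : T * T) : bool := e p.1 p.2 && (enum_rank p.1 < enum_rank p.2)%N.
Definition edge_t := {p : T * T | sedge p}.

End Graph.
HB.instance Definition _ (T : finType) (e : rel T) :=
  Finite.copy (edge_t e) {p : T * T | sedge e p}.

Section Subdiv.
Variable T : finType.
Variable e : rel T.
(* subdivision S(G): vertices are old vertices plus one new vertex per edge *)
Definition subdiv_v := (T + edge_t e)%type.
Definition subdiv_rel : rel subdiv_v := fun u v =>
  match u, v with
  | inl x, inr f => (x == (val f).1) || (x == (val f).2)
  | inr f, inl x => (x == (val f).1) || (x == (val f).2)
  | _, _ => false
  end.
End Subdiv.
HB.instance Definition _ (T : finType) (e : rel T) :=
  Finite.copy (subdiv_v e) (T + edge_t e)%type.

(* Main.v *)
Require Import Defs.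
From mathcomp Require Import all_boot all_order all_algebra.
From mathcomp Require Import ring lra zify.
Set Implicit Arguments. Unset Strict Implicit. Unset Printing Implicit Defensive.
Import Order.TTheory GRing.Theory Num.Theory.
Local Open Scope ring_scope.


Section General.
Variable R : realFieldType.
Variable U : finType.
Variable e : rel U.
Hypothesis esym : symmetric e.
Hypothesis eirr : irreflexive e.

Definition lapf (w : U -> R) (x : U) : R := \sum_(y | e x y) (w x - w y).
Definition rowf (w : U -> R) : 'rV[R]_#|U| := \row_k w (enum_val k).

Lemma degE x : (deg e x)%:R = \sum_(y | e x y) (1 : R).
Proof. by rewrite sumr_const. Qed.

Lemma lapfE w x : lapf w x = (deg e x)%:R * w x - \sum_(y | e x y) w y.
Proof. by rewrite /lapf sumrB degE mulr_suml; congr (_ - _); apply: eq_bigr => y _; rewrite mul1r. Qed.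

Lemma rowL (w : U -> R) y : (rowf w *m lap R e) 0 (enum_rank y) = lapf w y.
Proof.
rewrite mxE (reindex (@enum_rank U)) /=; last first.
  by exists enum_val => i _; rewrite ?enum_rankK ?enum_valK.
rewrite lapfE (bigD1 y) //= !mxE !enum_rankK eqxx mulrC; congr (_ + _).
rewrite -sumrN [RHS]big_mkcond [LHS]big_mkcond /=; apply: eq_bigr => x _.
rewrite !mxE !enum_rankK (inj_eq enum_rank_inj) esym.
case: eqP => [->|_] /=; first by rewrite eirr.
by case: (e y x) => /=; rewrite ?mulrN1 ?mulr0 ?oppr0.
Qed.

Definition kerconst := forall w : U -> R, (forall z, lapf w z = 0) -> forall a b, w a = w b.

Lemma resist_char (kc : kerconst) x y (v : U -> R) :
  (forall z, lapf v z = (z == x)%:R - (z == y)%:R) -> resist R e x y = v x - v y.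
Proof.
move=> hv; rewrite /resist.
set b := \row_k _.
have hb : b = rowf v *m lap R e.
  by apply/rowP => j; rewrite -[j]enum_valK rowL hv mxE enum_rankK.
have sub : (b <= lap R e)%MS by rewrite hb submxMl.
have hu := mulmxKpV sub.
set u := b *m pinvmx _ in hu *.
pose w z := u 0 (enum_rank z) - v z.
have hw : forall z, lapf w z = 0.
  move=> z; rewrite -rowL.
  have -> : rowf w = u - rowf v.
    apply/rowP => j; rewrite /rowf mxE [in RHS]mxE [X in _ + X]mxE mxE /w enum_valK.
    by rewrite [(\row_k _) 0 j]mxE /u mxE.
  by rewrite mulmxBl hu -hb subrr mxE.
have := kc _ hw x y; rewrite /w => h; lra.
Qed.

Definition pot (g : U -> R) (z : U) : R :=
  (rowf g *m pinvmx (lap R e)) 0 (enum_rank z).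

Lemma pot_spec (kc : kerconst) (z0 : U) (g : U -> R) :
  \sum_z g z = 0 -> forall z, lapf (pot g) z = g z.
Proof.
move=> hg.
have n0 : (0 < #|U|)%N by apply/card_gt0P; exists z0.
have Lsym : forall i j, lap R e i j = lap R e j i.
  by move=> i j; rewrite !mxE eq_sym; case: eqP => [->|_] //; rewrite [e (enum_val i) _]esym.
have one_ker : forall (r : 'rV[R]_#|U|), r *m lap R e = 0 ->
    (r <= (const_mx 1 : 'rV[R]_#|U|))%MS.
  move=> r hr; pose w z := r 0 (enum_rank z).
  have hw : forall z, lapf w z = 0.
    move=> z; rewrite -rowL.
    have -> : rowf w = r by apply/rowP => j; rewrite !mxE /w enum_valK.
    by rewrite hr mxE.
  have -> : r = r 0 (enum_rank z0) *: const_mx 1.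
    apply/rowP => j; rewrite !mxE mulr1 -[j]enum_valK.
    exact: (kc _ hw).
  by rewrite scalemx_sub.
have rk1 : (\rank (kermx (lap R e)) <= 1)%N.
  apply: leq_trans (rank_leq_row (const_mx 1 : 'rV[R]_#|U|)).
  apply: mxrankS; apply/row_subP => i; apply: one_ker.
  by rewrite -row_mul mulmx_ker row0.
have rkL : (#|U| - 1 <= \rank (lap R e))%N.
  by move: rk1; rewrite mxrank_ker; lia.
pose Z := kermx (const_mx 1 : 'cV[R]_#|U|).
have rkZ : \rank Z = (#|U| - 1)%N.
  rewrite mxrank_ker.
  suff -> : \rank (const_mx 1 : 'cV[R]_#|U|) = 1%N by [].
  apply/eqP; rewrite eqn_leq rank_leq_col lt0n mxrank_eq0.
  apply/eqP => /matrixP /(_ (Ordinal n0) 0); rewrite !mxE; apply/eqP.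
  exact: oner_neq0.
have LZ : (lap R e <= Z)%MS.
  apply/sub_kermxP; apply/matrixP => i j; rewrite !mxE.
  rewrite (eq_bigr (fun k => rowf (fun _ => 1) 0 k * lap R e k i)); last first.
    by move=> k _; rewrite Lsym !mxE mulr1 mul1r.
  have := rowL (fun _ => 1) (enum_val i); rewrite enum_valK mxE => ->.
  by rewrite /lapf big1 // => *; rewrite subrr.
have : (lap R e == Z)%MS by rewrite -(geq_leqif (mxrank_leqif_eq LZ)) rkZ.
case/andP => _ ZL.
have bZ : (rowf g <= Z)%MS.
  apply/sub_kermxP; apply/matrixP => i j; rewrite !mxE.
  rewrite (reindex (@enum_rank U)) /=; last first.
    by exists enum_val => k _; rewrite ?enum_rankK ?enum_valK.
  by rewrite -[RHS]hg; apply: eq_bigr => k _; rewrite !mxE enum_rankK mulr1.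
move=> z; rewrite /pot.
rewrite -rowL.
have -> : rowf (fun z => (rowf g *m pinvmx (lap R e)) 0 (enum_rank z))
   = rowf g *m pinvmx (lap R e).
  by apply/rowP => j; rewrite [LHS]mxE enum_valK.
rewrite mulmxKpV; last exact: submx_trans bZ ZL.
by rewrite mxE enum_rankK.
Qed.

Lemma kc_conn : (forall x y, connect e x y) -> kerconst.
Proof.
move=> conn w hw.
have edge_eq : forall x y, e x y -> w x = w y.
  have h1 : \sum_x \sum_(y | e x y) w x * (w x - w y) = 0.
    by apply: big1 => x _; rewrite -mulr_sumr -/(lapf w x) hw mulr0.
  have h2 : \sum_x \sum_(y | e x y) w y * (w y - w x) = 0.
    under eq_bigr do rewrite big_mkcond.
    rewrite exchange_big /=; apply: big1 => y _.
    rewrite -big_mkcond /=.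
    under eq_bigl do rewrite esym.
    by rewrite -mulr_sumr -/(lapf w y) hw mulr0.
  have S0 : \sum_x \sum_(y | e x y) (w x - w y)^+2 = 0.
    rewrite (_ : \sum_x _ = \sum_x \sum_(y | e x y) w x * (w x - w y)
       + \sum_x \sum_(y | e x y) w y * (w y - w x)); first by rewrite h1 h2 addr0.
    rewrite -big_split; apply: eq_bigr => x _.
    by rewrite -big_split; apply: eq_bigr => y _ /=; ring.
  move=> x y exy.
  have h : \sum_(y | e x y) (w x - w y)^+2 = 0.
    by apply: (psumr_eq0P _ S0) => // *; apply: sumr_ge0 => *; exact: sqr_ge0.
  have : (w x - w y)^+2 = 0.
    by apply: (psumr_eq0P _ h) => // *; exact: sqr_ge0.
  by move/eqP; rewrite sqrf_eq0 subr_eq0 => /eqP.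
move=> a b; have /connectP [p pth ->] := conn a b.
elim: p a pth => [|y p IH] a //= /andP [eay pth].
by rewrite -(IH y pth) (edge_eq _ _ eay).
Qed.

End General.


Section Generic.
Variable R : realFieldType.

Lemma sum_delta (U : finType) (G : U -> R) x : \sum_y (y == x)%:R * G y = G x.
Proof.
rewrite (bigD1 x) //= eqxx mul1r big1 ?addr0 // => y /negbTE ->; by rewrite mul0r.
Qed.

Lemma sum_pred_delta (U : finType) (P : pred U) s :
  \sum_(t | P t) ((t == s)%:R : R) = (P s)%:R.
Proof.
rewrite big_mkcond /= (bigD1 s) //= eqxx big1 ?addr0; first by case: (P s).
by move=> t /negbTE ->; case: (P t).
Qed.

Lemma exch (I J : finType) (Q : I -> J -> bool) (F : I -> J -> R) :
  \sum_i \sum_(j | Q i j) F i j = \sum_j \sum_(i | Q i j) F i j.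
Proof.
under eq_bigr do rewrite big_mkcond.
rewrite exchange_big; apply: eq_bigr => j _; by rewrite [RHS]big_mkcond.
Qed.

Lemma sum_cst (U : finType) (c : R) : \sum_(x : U) c = #|U|%:R * c.
Proof. by rewrite sumr_const mulr_natl. Qed.

Lemma pair_half (U : finType) (F : U -> U -> R) :
  (forall s t, F s t = F t s) -> (forall s, F s s = 0) ->
  2 * \sum_s \sum_(t | (enum_rank s < enum_rank t)%N) F s t = \sum_s \sum_t F s t.
Proof.
move=> Fs F0.
have E : forall s, \sum_t F s t = \sum_(t | (enum_rank s < enum_rank t)%N) F s t
            + \sum_(t | (enum_rank t < enum_rank s)%N) F s t.
  move=> s; rewrite (bigID (fun t => (enum_rank s < enum_rank t)%N)) /=; congr (_ + _).
  rewrite big_mkcond [RHS]big_mkcond; apply: eq_bigr => t _ /=.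
  case: (ltngtP (enum_rank s) (enum_rank t)) => //= h.
  by have -> := enum_rank_inj (val_inj h); rewrite F0.
under [RHS]eq_bigr do rewrite E.
rewrite big_split /= (exch (fun s t => (enum_rank t < enum_rank s)%N)).
by under [X in _ = _ + X]eq_bigr do under eq_bigr do rewrite Fs; rewrite mulr2n mulrDl mul1r.
Qed.

Lemma pairsum_add (U : finType) (d : U -> R) (B : U -> U -> R) :
  (forall s t, B s t = B t s) ->
  \sum_s \sum_(t | (enum_rank s < enum_rank t)%N) (d s + d t) * (B s s + B t t - 2 * B s t)
  = #|U|%:R * (\sum_s d s * B s s) + (\sum_s d s) * (\sum_s B s s)
    - 2 * \sum_s \sum_t d s * B s t.
Proof.
move=> Bs.
have h := @pair_half U (fun s t => (d s + d t) * (B s s + B t t - 2 * B s t)).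
have {h} := h (fun s t => ltac:(rewrite (Bs s t); ring)) (fun s => ltac:(ring)).
have inner : forall s, \sum_t (d s + d t) * (B s s + B t t - 2 * B s t) =
   #|U|%:R * (d s * B s s) + d s * (\sum_t B t t) + B s s * (\sum_t d t)
   + \sum_t d t * B t t - 2 * (\sum_t d s * B s t) - 2 * \sum_t d t * B s t.
  move=> s.
  rewrite (eq_bigr (fun t => d s * B s s + d s * B t t + B s s * d t + d t * B t t
     - 2 * (d s * B s t) - 2 * (d t * B s t))); last by move=> t _; ring.
  rewrite !sumrB !big_split /= -!mulr_sumr sum_cst; ring.
move=> h.
have E : \sum_s \sum_t (d s + d t) * (B s s + B t t - 2 * B s t) =
   2 * (#|U|%:R * (\sum_s d s * B s s) + (\sum_s d s) * (\sum_s B s s)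
    - 2 * \sum_s \sum_t d s * B s t).
  under eq_bigr do rewrite inner.
  rewrite !sumrB !big_split /= -!mulr_sumr -!mulr_suml sum_cst.
  rewrite (exch (fun _ _ => true) (fun s t => d t * B s t)) /=.
  under [X in _ - 2 * X]eq_bigr do under eq_bigr do rewrite Bs.
  ring.
lra.
Qed.

Lemma pairsum_mul (U : finType) (d : U -> R) (B : U -> U -> R) :
  (forall s t, B s t = B t s) ->
  \sum_s \sum_(t | (enum_rank s < enum_rank t)%N) (d s * d t) * (B s s + B t t - 2 * B s t)
  = (\sum_s d s) * (\sum_s d s * B s s) - \sum_s \sum_t d s * d t * B s t.
Proof.
move=> Bs.
have h := @pair_half U (fun s t => (d s * d t) * (B s s + B t t - 2 * B s t)).
have {h} := h (fun s t => ltac:(rewrite (Bs s t); ring)) (fun s => ltac:(ring)).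
have inner : forall s, \sum_t (d s * d t) * (B s s + B t t - 2 * B s t) =
   d s * B s s * (\sum_t d t) + d s * (\sum_t d t * B t t)
   - 2 * \sum_t d s * d t * B s t.
  move=> s.
  rewrite (eq_bigr (fun t => d s * B s s * d t + d s * (d t * B t t)
     - 2 * (d s * d t * B s t))); last by move=> t _; ring.
  rewrite !sumrB !big_split /= -!mulr_sumr; ring.
move=> h.
have E : \sum_s \sum_t (d s * d t) * (B s s + B t t - 2 * B s t) =
  2 * ((\sum_s d s) * (\sum_s d s * B s s) - \sum_s \sum_t d s * d t * B s t).
  under eq_bigr do rewrite inner.
  rewrite !sumrB !big_split /= -!mulr_sumr -!mulr_suml.
  ring.
lra.
Qed.

End Generic.

Section LapGen.
Variable R : realFieldType.
Variable U : finType.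
Variable e : rel U.

Lemma lapf_ext (w w' : U -> R) u : (forall t, w t = w' t) -> lapf e w u = lapf e w' u.
Proof. by move=> h; apply: eq_bigr => t _; rewrite !h. Qed.

Lemma lapfB (w w' : U -> R) u :
  lapf e (fun t => w t - w' t) u = lapf e w u - lapf e w' u.
Proof. by rewrite /lapf -sumrB; apply: eq_bigr => t _; ring. Qed.

Lemma lapfD (w w' : U -> R) u :
  lapf e (fun t => w t + w' t) u = lapf e w u + lapf e w' u.
Proof. by rewrite /lapf -big_split /=; apply: eq_bigr => t _; ring. Qed.

Lemma lapfZ (c : R) (w : U -> R) u :
  lapf e (fun t => c * w t) u = c * lapf e w u.
Proof. by rewrite /lapf mulr_sumr; apply: eq_bigr => t _; ring. Qed.

Lemma lapf_shift (c : R) (w : U -> R) u :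
  lapf e (fun t => w t - c) u = lapf e w u.
Proof. by apply: eq_bigr => t _; ring. Qed.

Lemma lapf_delta s u :
  lapf e (fun t => ((t == s)%:R : R)) u = (u == s)%:R * (deg e u)%:R - (e u s)%:R.
Proof.
by rewrite /lapf sumrB sum_pred_delta degE mulr_sumr; under [in RHS]eq_bigr do rewrite mulr1.
Qed.

Lemma lapf_sum (I : finType) (a : I -> R) (Kf : I -> U -> R) u :
  lapf e (fun t => \sum_i a i * Kf i t) u = \sum_i a i * lapf e (Kf i) u.
Proof.
rewrite /lapf; under eq_bigr do rewrite -sumrB.
rewrite exchange_big /=; apply: eq_bigr => i _.
by rewrite mulr_sumr; apply: eq_bigr => t _; ring.
Qed.

Hypothesis esym : symmetric e.

Lemma lapf_adj (u w : U -> R) : \sum_z u z * lapf e w z = \sum_z lapf e u z * w z.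
Proof.
have h : \sum_z \sum_(y | e z y) u y * w z = \sum_z \sum_(y | e z y) u z * w y.
  rewrite exch; apply: eq_bigr => z _; apply: eq_bigl => y; by rewrite esym.
transitivity (\sum_z \sum_(y | e z y) u z * w z - \sum_z \sum_(y | e z y) u z * w y).
  by rewrite -sumrB; apply: eq_bigr => z _; rewrite mulr_sumr -sumrB;
     apply: eq_bigr => y _; ring.
rewrite -h -sumrB; apply: eq_bigr => z _; rewrite mulr_suml -sumrB.
by apply: eq_bigr => y _; ring.
Qed.

End LapGen.


Section Main.
Variable R : realFieldType.
Variable T : finType.
Variable e : rel T.
Hypothesis esym : symmetric e.
Hypothesis eirr : irreflexive e.

Definition e1 (f : edge_t e) : T := (val f).1.
Definition e2 (f : edge_t e) : T := (val f).2.

Lemma e12 f : e (e1 f) (e2 f).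
Proof. by case/andP: (valP f). Qed.

Lemma e1n2 f : e1 f != e2 f.
Proof. by apply/eqP => h; have := e12 f; rewrite h eirr. Qed.

Lemma edge_sum (h : T -> T -> R) :
  \sum_(f : edge_t e) (h (e1 f) (e2 f) + h (e2 f) (e1 f)) = \sum_x \sum_(y | e x y) h x y.
Proof.
have H1 : forall F : T * T -> R, \sum_(f : edge_t e) F (val f) = \sum_(p | sedge e p) F p.
  move=> F; rewrite [RHS](reindex_omap (val : edge_t e -> T * T) insub); last first.
    by move=> p sp; rewrite insubT.
  by apply: eq_bigl => -[p sp] /=; rewrite insubT sp /=; symmetry; apply/eqP; congr Some; apply: val_inj.
transitivity (\sum_x \sum_(y | e x y && (enum_rank x < enum_rank y)%N) (h x y + h y x)).
  rewrite (H1 (fun p => h p.1 p.2 + h p.2 p.1)) pair_big_dep /=.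
  by apply: eq_bigl => -[x y].
rewrite [RHS](eq_bigr (fun x => \sum_(y | e x y && (enum_rank x < enum_rank y)%N) h x y
   + \sum_(y | e y x && (enum_rank y < enum_rank x)%N) h x y)); last first.
  move=> x _; rewrite (bigID (fun y => (enum_rank x < enum_rank y)%N)) /=; congr (_ + _).
  apply: eq_bigl => y; case exy : (e x y); rewrite esym exy //=.
  have nyx : y != x by apply/eqP => h0; move: exy; rewrite h0 eirr.
  rewrite -leqNgt leq_eqVlt.
  have -> : (nat_of_ord (enum_rank y) == nat_of_ord (enum_rank x)) = false.
    apply/negbTE; apply: contra nyx => /eqP h0; apply/eqP.
    by apply: enum_rank_inj; apply: val_inj.
  by [].
rewrite big_split /=; under eq_bigr do rewrite big_split /=.
rewrite big_split /=; congr (_ + _).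
by rewrite (exch (fun x y => e y x && (enum_rank y < enum_rank x)%N)).
Qed.

Hypothesis conn : forall x y, connect e x y.
Variable r : T.

Lemma sum_delta_r (U : finType) (G : U -> R) x : \sum_y G y * (y == x)%:R = G x.
Proof. by rewrite -[RHS](sum_delta G x); apply: eq_bigr => y _; rewrite mulrC. Qed.

Lemma sum_delta1 (U : finType) (x : U) : \sum_y ((y == x)%:R : R) = 1.
Proof. by rewrite -[RHS](sum_delta (fun _ => (1 : R)) x); apply: eq_bigr => y _; rewrite mulr1. Qed.

Definition kcG := kc_conn (R := R) esym conn.

Definition Pot (x : T) : T -> R := pot e (fun z => (z == x)%:R - (z == r)%:R).

Lemma Pot_spec x z : lapf e (Pot x) z = (z == x)%:R - (z == r)%:R.
Proof.
apply: (pot_spec esym eirr kcG r).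
by rewrite sumrB !sum_delta1 subrr.
Qed.

Definition K (x y : T) : R := Pot x y - Pot x r.

Lemma K_spec x z : lapf e (K x) z = (z == x)%:R - (z == r)%:R.
Proof. by rewrite /K lapf_shift Pot_spec. Qed.

Lemma K_sym x y : K x y = K y x.
Proof.
have := lapf_adj esym (Pot x) (Pot y).
under eq_bigr do rewrite Pot_spec.
under [X in _ = X -> _]eq_bigr do rewrite Pot_spec.
rewrite /K.
under eq_bigr do rewrite mulrBr.
under [X in _ = X -> _]eq_bigr do rewrite mulrBl.
rewrite !sumrB !sum_delta_r !sum_delta.
by [].
Qed.

Lemma resistG x y : resist R e x y = K x x + K y y - 2 * K x y.
Proof.
rewrite (@resist_char _ _ _ esym eirr kcG x y (fun z => K x z - K y z)).
  by rewrite (K_sym y x); ring.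
by move=> z; rewrite lapfB !K_spec; ring.
Qed.

Definition d (x : T) : R := (deg e x)%:R.
Definition n : R := (#|T|)%:R.
Definition m : R := (#|{: edge_t e}|)%:R.

Lemma sum_d : \sum_x d x = 2 * m.
Proof.
rewrite /d; under eq_bigr do rewrite degE.
rewrite -(edge_sum (fun _ _ => 1)) sum_cst /m; ring.
Qed.

Definition a1 := \sum_x K x x.
Definition a2 := \sum_x d x * K x x.
Definition a3 := \sum_x \sum_y d x * K x y.
Definition a4 := \sum_x \sum_y d x * d y * K x y.

Lemma addG : add_deg_kirchhoff R e = n * a2 + 2 * m * a1 - 2 * a3.
Proof.
rewrite /add_deg_kirchhoff.
under eq_bigr do under eq_bigr do rewrite resistG.
rewrite (pairsum_add (fun x => (deg e x)%:R) K_sym).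
rewrite -/d; under eq_bigr do rewrite -/(d _).
by rewrite sum_d.
Qed.

Lemma mulG : mul_deg_kirchhoff R e = 2 * m * a2 - a4.
Proof.
rewrite /mul_deg_kirchhoff.
under eq_bigr do under eq_bigr do rewrite resistG.
rewrite (pairsum_mul (fun x => (deg e x)%:R) K_sym).
by rewrite -/d sum_d.
Qed.

Local Notation S := (subdiv_v e).
Local Notation se := (@subdiv_rel T e).

Lemma sumS (F : S -> R) : \sum_(s : S) F s = \sum_x F (inl x) + \sum_(f : edge_t e) F (inr f).
Proof. by rewrite big_sumType. Qed.

Lemma or_ind (x a b : T) (F : R) : a != b ->
  (if (x == a) || (x == b) then F else 0) = ((x == a)%:R + (x == b)%:R) * F.
Proof.
move=> nab; case: (eqVneq x a) => [->|nxa] /=.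
  by rewrite (negbTE nab) addr0 mul1r.
by case: (x == b); rewrite /= ?add0r ?mul1r ?mul0r.
Qed.

Lemma lapS_inl (w : S -> R) x :
  lapf se w (inl x) = \sum_f ((x == e1 f)%:R + (x == e2 f)%:R) * (w (inl x) - w (inr f)).
Proof.
rewrite /lapf big_sumType /= big_pred0_eq add0r big_mkcond /=.
by apply: eq_bigr => f _; rewrite or_ind // e1n2.
Qed.

Lemma lapS_inr (w : S -> R) f :
  lapf se w (inr f) = (w (inr f) - w (inl (e1 f))) + (w (inr f) - w (inl (e2 f))).
Proof.
rewrite /lapf big_sumType /= big_pred0_eq addr0 big_mkcond /=.
under eq_bigr do rewrite or_ind ?e1n2 //.
by under eq_bigr do rewrite mulrDl; rewrite big_split /= !sum_delta.
Qed.

Lemma incid (g : T -> T -> R) x : (forall u v, g u v = g v u) ->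
  \sum_f ((x == e1 f)%:R + (x == e2 f)%:R) * g (e1 f) (e2 f) = \sum_(y | e x y) g x y.
Proof.
move=> gs.
transitivity (\sum_f ((fun u v => (x == u)%:R * g u v) (e1 f) (e2 f)
                    + (fun u v => (x == u)%:R * g u v) (e2 f) (e1 f))).
  by apply: eq_bigr => f _ /=; rewrite (gs (e2 f)); ring.
rewrite (edge_sum (fun u v => (x == u)%:R * g u v)); under eq_bigr do rewrite -mulr_sumr.
by rewrite -[RHS](sum_delta (fun u => \sum_(y | e u y) g u y) x);
   apply: eq_bigr => u _; rewrite eq_sym.
Qed.

Lemma degS_inl x : (deg se (inl x))%:R = d x.
Proof.
have := @lapf_delta R _ se (inl x) (inl x).
rewrite eqxx mul1r /= subr0 lapS_inl => <-.
rewrite (eq_bigr (fun f => ((x == e1 f)%:R + (x == e2 f)%:R) * (fun _ _ => (1:R)) (e1 f) (e2 f))).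
  by rewrite (incid (g:=fun _ _ => 1)) // /d degE.
by move=> f _ /=; rewrite eqxx subr0.
Qed.

Lemma degS_inr f : ((deg se (inr f))%:R : R) = 2.
Proof.
have := @lapf_delta R _ se (inr f) (inr f).
rewrite eqxx mul1r /= subr0 lapS_inr => <-.
by rewrite /= eqxx /= !subr0.
Qed.

Definition lift (z : T -> R) (s : S) : R :=
  match s with inl y => 2 * z y | inr f => z (e1 f) + z (e2 f) end.

Lemma lapS_lift_inl z x : lapf se (lift z) (inl x) = lapf e z x.
Proof.
rewrite lapS_inl /=.
rewrite (eq_bigr (fun f => ((x == e1 f)%:R + (x == e2 f)%:R) *
    (fun u v => 2 * z x - (z u + z v)) (e1 f) (e2 f))) //.
rewrite (incid (g:=fun u v => 2 * z x - (z u + z v))); last by move=> u v; ring.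
by apply: eq_bigr => y _; ring.
Qed.

Lemma lapS_lift_inr z f : lapf se (lift z) (inr f) = 0.
Proof. by rewrite lapS_inr /=; ring. Qed.

Lemma kcS : kerconst R se.
Proof.
move=> w hw.
pose z y := w (inl y) / 2.
have wl : forall t, w t = lift z t.
  case=> [y|f] /=; rewrite /z; first by lra.
  by have := hw (inr f); rewrite lapS_inr => h; lra.
have hz : forall x, lapf e z x = 0.
  by move=> x; rewrite -lapS_lift_inl -(hw (inl x)); apply: lapf_ext => t; rewrite wl.
have zc := kcG hz.
have key : forall t, w t = 2 * z r.
  move=> t; rewrite wl; case: t => [y|f] /=; first by rewrite (zc y r).
  by rewrite (zc (e1 f) r) (zc (e2 f) r); ring.
by move=> a b; rewrite !key.
Qed.

Definition c (s : S) (y : T) : R :=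
  match s with inl x => 2 * (y == x)%:R | inr f => (y == e1 f)%:R + (y == e2 f)%:R end.
Definition N (s : S) : R := match s with inl _ => 0 | inr _ => 1 end.
Definition A (s t : S) : R := 2^-1 * \sum_y \sum_z c s y * c t z * K y z.
Definition B (s t : S) : R := A s t + (s == t)%:R * N s * 2^-1.
Definition kk (s : S) (z : T) : R := 2^-1 * \sum_y c s y * K y z.

Lemma c_sum (t : S) (k : T -> R) : \sum_z c t z * k z = lift k t.
Proof.
case: t => [y|f] /=.
  by rewrite -sum_delta mulr_sumr; apply: eq_bigr => z _; ring.
under eq_bigr do rewrite mulrDl.
by rewrite big_split /= !sum_delta.
Qed.

Lemma c_tot (s : S) : \sum_y c s y = 2.
Proof.
case: s => [x|f] /=.
  by rewrite -mulr_sumr sum_delta1 mulr1.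
by rewrite big_split /= !sum_delta1.
Qed.

Lemma c_dot (s : S) x : \sum_y c s y * (x == y)%:R = c s x.
Proof. by rewrite -sum_delta; apply: eq_bigr => y _; rewrite eq_sym mulrC. Qed.

Lemma A_kk s t : A s t = lift (kk s) t.
Proof.
rewrite -c_sum /A /kk exchange_big mulr_sumr; apply: eq_bigr => z _.
by rewrite !mulr_sumr; apply: eq_bigr => y _; ring.
Qed.

Lemma B_lift s t : B s t = lift (kk s) t + (N s * 2^-1) * (t == s)%:R.
Proof. by rewrite /B A_kk eq_sym; ring. Qed.

Lemma A_sym s t : A s t = A t s.
Proof.
rewrite /A exchange_big; congr (_ * _); apply: eq_bigr => y _.
by apply: eq_bigr => z _; rewrite K_sym; ring.
Qed.

Lemma B_sym s t : B s t = B t s.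
Proof.
rewrite /B A_sym eq_sym; congr (_ + _).
by case: eqP => [->|_]; rewrite ?mul0r.
Qed.

Lemma lapf_kk s x : lapf e (kk s) x = 2^-1 * c s x - (x == r)%:R.
Proof.
rewrite /kk lapfZ lapf_sum.
under eq_bigr do rewrite K_spec mulrBr.
rewrite sumrB c_dot -mulr_suml c_tot; lra.
Qed.

Lemma or_nat (x a b : T) : a != b ->
  (((x == a) || (x == b))%:R : R) = (x == a)%:R + (x == b)%:R.
Proof. by move=> nab; have := or_ind x 1 nab; rewrite mulr1; case: ifP. Qed.

Lemma inlE (x w : T) : (inl x == inl w :> S) = (x == w).
Proof. by []. Qed.
Lemma inrE (f g : edge_t e) : (inr f == inr g :> S) = (f == g).
Proof. by []. Qed.

Lemma lapS_B s u : lapf se (B s) u = (u == s)%:R - (u == inl r)%:R.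
Proof.
rewrite (lapf_ext se u (B_lift s)) lapfD lapfZ lapf_delta.
case: u => [x|f].
  rewrite lapS_lift_inl lapf_kk.
  case: s => [w|g] /=.
    rewrite !inlE; lra.
  rewrite or_nat ?e1n2 //; lra.
rewrite lapS_lift_inr.
case: s => [w|g] /=.
  lra.
rewrite degS_inr inrE; lra.
Qed.

Lemma se_sym : symmetric se.
Proof. by case=> [x|f] [y|g]. Qed.

Lemma se_irr : irreflexive se.
Proof. by case. Qed.

Lemma resistS s t : resist R se s t = B s s + B t t - 2 * B s t.
Proof.
rewrite (@resist_char _ _ se se_sym se_irr kcS s t (fun u => B s u - B t u)).
  by rewrite (B_sym t s); ring.
by move=> u; rewrite lapfB !lapS_B; ring.
Qed.

Lemma card_S : ((#|{: S}|)%:R : R) = n + m.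
Proof. by rewrite card_sum natrD. Qed.

Lemma sum_dS : \sum_(s : S) (deg se s)%:R = 4 * m.
Proof.
rewrite sumS; under eq_bigr do rewrite degS_inl.
under [X in _ + X]eq_bigr do rewrite degS_inr.
by rewrite sum_d sum_cst /m; ring.
Qed.

Lemma kk_inl x z : kk (inl x) z = K x z.
Proof.
rewrite /kk /=; under eq_bigr do rewrite -mulrA.
by rewrite -mulr_sumr sum_delta mulrA mulVf ?mul1r // pnatr_eq0.
Qed.

Lemma kk_inr f z : kk (inr f) z = 2^-1 * (K (e1 f) z + K (e2 f) z).
Proof.
rewrite /kk /=; under eq_bigr do rewrite mulrDl.
by rewrite big_split /= !sum_delta.
Qed.

Lemma Bdiag_inl x : B (inl x) (inl x) = 2 * K x x.
Proof. by rewrite /B A_kk /= kk_inl /=; ring. Qed.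

Lemma Bdiag_inr f : B (inr f) (inr f) =
  2^-1 * (K (e1 f) (e1 f) + K (e2 f) (e2 f) + 2 * K (e1 f) (e2 f)) + 2^-1.
Proof.
rewrite /B A_kk /= !kk_inr inrE eqxx (K_sym (e2 f) (e1 f)).
rewrite mul1r mul1r; ring.
Qed.

Lemma EK : \sum_(f : edge_t e) (K (e1 f) (e1 f) + K (e2 f) (e2 f) + 2 * K (e1 f) (e2 f))
  = 2 * a2 - (n - 1).
Proof.
rewrite (eq_bigr (fun f => (fun u v => K u u + K u v) (e1 f) (e2 f)
                       + (fun u v => K u u + K u v) (e2 f) (e1 f))); last first.
  by move=> f _ /=; rewrite (K_sym (e2 f) (e1 f)); ring.
rewrite (edge_sum (fun u v => K u u + K u v)).
have hu : forall u, \sum_(v | e u v) (K u u + K u v)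
     = 2 * (d u * K u u) - ((u == u)%:R - (u == r)%:R).
  move=> u; rewrite -(K_spec u u) /lapf /d degE mulr_suml mulr_sumr -sumrB.
  by apply: eq_bigr => v _; ring.
under eq_bigr do rewrite hu eqxx.
rewrite sumrB -mulr_sumr sumrB sum_cst sum_delta1 /a2 /n mulr1; ring.
Qed.

Lemma sum_BS : \sum_(s : S) B s s = 2 * a1 + 2^-1 * (2 * a2 - (n - 1)) + m * 2^-1.
Proof.
rewrite sumS; under eq_bigr do rewrite Bdiag_inl.
under [X in _ + X]eq_bigr do rewrite Bdiag_inr.
rewrite big_split /= -mulr_sumr -mulr_sumr EK sum_cst /a1 /m; ring.
Qed.

Lemma sum_dBS : \sum_(s : S) (deg se s)%:R * B s s = 4 * a2 - (n - 1) + m.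
Proof.
rewrite sumS; under eq_bigr do rewrite Bdiag_inl degS_inl.
under [X in _ + X]eq_bigr do rewrite Bdiag_inr degS_inr.
under [X in _ + X]eq_bigr do rewrite mulrDr mulrA mulrV ?mul1r ?unitfE ?pnatr_eq0 //.
rewrite big_split /= EK sum_cst /a2 /m.
rewrite (eq_bigr (fun x => 2 * (d x * K x x))); last by move=> x _; ring.
rewrite -mulr_sumr; ring.
Qed.

Definition phi (y : T) : R := \sum_z (2 + d z) * K y z.

Lemma c_col z : \sum_(t : S) c t z = 2 + d z.
Proof.
rewrite sumS /=; congr (_ + _).
  by rewrite -mulr_sumr (eq_bigr (fun x => (x == z)%:R)) ?sum_delta1 ?mulr1 //
     => x _; rewrite eq_sym.
rewrite (eq_bigr (fun f => ((z == e1 f)%:R + (z == e2 f)%:R) * (fun _ _ => (1:R)) (e1 f) (e2 f))).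
  by rewrite (incid (g:=fun _ _ => 1)) // /d degE.
by move=> f _; rewrite mulr1.
Qed.

Lemma rowA s : \sum_t A s t = 2^-1 * lift phi s.
Proof.
rewrite /A -mulr_sumr -c_sum; congr (_ * _).
rewrite exchange_big; apply: eq_bigr => y _.
rewrite exchange_big /phi mulr_sumr; apply: eq_bigr => z _.
by rewrite -c_col mulr_suml mulr_sumr; apply: eq_bigr => t _; ring.
Qed.

Lemma sum_dBst : \sum_(s : S) \sum_(t : S) (deg se s)%:R * B s t = 4 * a3 + 2 * a4 + m.
Proof.
have hrow : forall s, \sum_t (deg se s)%:R * B s t
    = (deg se s)%:R * (2^-1 * lift phi s + N s * 2^-1).
  move=> s; rewrite -mulr_sumr /B big_split /= rowA; congr (_ * (_ + _)).
  rewrite (eq_bigr (fun t => (t == s)%:R * (N s * 2^-1))); last first.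
    by move=> t _; rewrite eq_sym mulrA.
  by rewrite -mulr_suml sum_delta1 mul1r.
under eq_bigr do rewrite hrow.
rewrite sumS /=.
under eq_bigr do rewrite degS_inl.
under [X in _ + X]eq_bigr do rewrite degS_inr.
have hf : \sum_(f : edge_t e) (phi (e1 f) + phi (e2 f)) = \sum_x d x * phi x.
  rewrite (edge_sum (fun u _ => phi u)); apply: eq_bigr => x _.
  by rewrite /d degE mulr_suml; apply: eq_bigr => y _; rewrite mul1r.
have h2 : \sum_x d x * phi x = 2 * a3 + a4.
  rewrite /a3 /a4 /phi mulr_sumr -big_split /=; apply: eq_bigr => x _.
  rewrite mulr_sumr mulr_sumr -big_split /=; apply: eq_bigr => y _; ring.
rewrite (eq_bigr (fun x => d x * phi x)); last by move=> x _; field.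
rewrite (eq_bigr (fun f => (phi (e1 f) + phi (e2 f)) + 1)); last by move=> f _; field.
rewrite big_split /= hf sum_cst h2 /m; ring.
Qed.

Lemma addS : add_deg_kirchhoff R se =
  (n + m) * (4 * a2 - (n - 1) + m)
  + 4 * m * (2 * a1 + 2^-1 * (2 * a2 - (n - 1)) + m * 2^-1)
  - 2 * (4 * a3 + 2 * a4 + m).
Proof.
rewrite /add_deg_kirchhoff.
under eq_bigr do under eq_bigr do rewrite resistS.
rewrite (pairsum_add (fun s => (deg se s)%:R) B_sym).
by rewrite card_S sum_dS sum_dBS sum_BS sum_dBst.
Qed.

End Main.


Theorem theorem2p4 (R : realFieldType) (T : finType) (e : rel T) :
  symmetric e -> irreflexive e ->
  (forall x y : T, connect e x y) ->
  (1 < #|T|)%N ->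
  let n : R := (#|T|)%:R in
  let m : R := (#|{: edge_t e}|)%:R in
  add_deg_kirchhoff R (@subdiv_rel T e) =
    4 * add_deg_kirchhoff R e + 4 * mul_deg_kirchhoff R e
    + (m + n) * (m - n + 1) + 2 * m * (m - n).
Proof.
move=> esym eirr conn hT n0 m0.
have [r _] : exists r : T, r \in T by apply/card_gt0P; exact: ltnW.
rewrite (addS R esym eirr conn r) (addG R esym eirr conn r) (mulG R esym eirr conn r).
rewrite /n0 /m0 /n /m; lra.
Qed.
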